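(* For each $n\in\omega$ let $X_n$ be a path connected metrizable space. Then $\mathfrak{h}(\prod_{n\in\omega} X_n) \simeq \prod_{n\in\omega}\mathfrak{h}(X_n)$, where $\prod_n X_n$ carries the product topology.
   Context: For a path connected metric space $(X,d)$ and $x\in X$, $L_x$ is the set of loops at $x$ with metric $\sup_{s\in[0,1]} d(l_0(s),l_1(s))$. A subgroup $G\le\pi_1(X,x)$ is closed if the set $\bigcup G\subseteq L_x$ of loops whose homotopy class lies in $G$ is closed in $L_x$; for $G\le \pi_1(X,x)$, $\overline{G}$ is the smallest closed subgroup containing $G$. For a path connected metrizable space $X$, the strong abelianization is $\mathfrak{h}(X) = \pi_1(X)/\overline{[\pi_1(X),\pi_1(X)]}$. *)

(* Defs.v *)
From HB Require Import structures.
From mathcomp Require Import all_boot all_order all_algebra.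
From mathcomp Require Import all_classical all_reals all_analysis.
From mathcomp Require Import Rstruct Rstruct_topology.
Set Implicit Arguments. Unset Strict Implicit. Unset Printing Implicit Defensive.
Import Order.TTheory GRing.Theory Num.Theory.
Local Open Scope classical_set_scope.
Local Open Scope ring_scope.

Notation R := Rdefinitions.R.

Definition I01 : set R := `[0%R, 1%R].

Definition is_metric (X : Type) (d : X -> X -> R) : Prop :=
  [/\ forall x y, 0 <= d x y,
      forall x y, d x y = 0 <-> x = y,
      forall x y, d x y = d y x &
      forall x y z, d x z <= d x y + d y z].

Definition metrizes (X : topologicalType) (d : X -> X -> R) : Prop :=
  is_metric d /\
  forall A : set X, open A <->
    (forall x, A x -> exists2 e : R, 0 < e & [set y | d x y < e] `<=` A).

Definition metrizable (X : topologicalType) : Prop := exists d, @metrizes X d.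

(** Paths are maps R -> X continuous on [0,1]; only values on [0,1] matter. *)
Definition is_path (X : topologicalType) (f : R -> X) : Prop :=
  {within I01, continuous f}.

Definition path_connected (X : topologicalType) : Prop :=
  forall x y : X, exists f : R -> X, [/\ is_path f, f 0 = x & f 1 = y].

Definition is_loop (X : topologicalType) (x : X) (l : R -> X) : Prop :=
  [/\ is_path l, l 0 = x & l 1 = x].

Definition path_homotopic (X : topologicalType) (l0 l1 : R -> X) : Prop :=
  exists H : R * R -> X,
    [/\ {within I01 `*` I01, continuous H},
        (forall s, I01 s -> H (s, 0) = l0 s /\ H (s, 1) = l1 s) &
        (forall t, I01 t -> H (0, t) = l0 0 /\ H (1, t) = l0 1)].

Definition concat (X : Type) (l0 l1 : R -> X) : R -> X :=
  fun s => if s <= 2^-1 then l0 (2 * s) else l1 (2 * s - 1).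

Definition reverse (X : Type) (l : R -> X) : R -> X := fun s => l (1 - s).

Definition commutator (X : Type) (a b : R -> X) : R -> X :=
  concat (concat (concat a b) (reverse a)) (reverse b).

Definition loop_dist (X : Type) (d : X -> X -> R) (l0 l1 : R -> X) : R :=
  sup [set d (l0 s) (l1 s) | s in I01].

(** A subgroup G of pi_1(X,x) is represented by the set of loops
    \bigcup G (loops whose homotopy class lies in G). *)
Definition loop_subgroup (X : topologicalType) (x : X) (S : set (R -> X)) : Prop :=
  [/\ S `<=` is_loop x,
      forall l l', S l -> is_loop x l' -> path_homotopic l l' -> S l',
      S (cst x),
      forall l l', S l -> S l' -> S (concat l l') &
      forall l, S l -> S (reverse l)].

(** \bigcup G is closed in L_x with the sup metric. *)
Definition loop_closed (X : topologicalType) (d : X -> X -> R) (x : X)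
    (S : set (R -> X)) : Prop :=
  forall l, is_loop x l -> ~ S l ->
    exists2 e : R, 0 < e &
      forall l', is_loop x l' -> loop_dist d l l' < e -> ~ S l'.

(** \bigcup [pi_1, pi_1]: the smallest subgroup containing all commutators. *)
Definition commutator_loops (X : topologicalType) (x : X) : set (R -> X) :=
  fun l => forall S, loop_subgroup x S ->
    (forall a b, is_loop x a -> is_loop x b -> S (commutator a b)) -> S l.

(** \bigcup of the closure of [pi_1, pi_1]: the smallest closed subgroup
    containing the commutator subgroup. *)
Definition closed_commutator_loops (X : topologicalType) (d : X -> X -> R)
    (x : X) : set (R -> X) :=
  fun l => forall S, loop_subgroup x S -> loop_closed d x S ->
    commutator_loops x `<=` S -> S l.

(** The strong abelianization h(X) = pi_1(X,x) / closure([pi_1,pi_1]),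
    presented as the set of loops at x modulo the relation
    l ~ l'  iff  [l][l']^-1 lies in the closed commutator subgroup,
    with multiplication induced by concatenation. *)
Definition h_eq (X : topologicalType) (d : X -> X -> R) (x : X)
    (l l' : R -> X) : Prop :=
  closed_commutator_loops d x (concat l (reverse l')).

(** An isomorphism h(prod_n X_n) ~= prod_n h(X_n) (the latter being the direct
    product of groups, with componentwise operation and equality), given
    as a map on representatives which is well defined and injective
    (h_eq-preserving and reflecting), a homomorphism, and surjective. *)
Definition h_prod_iso (X : nat -> topologicalType) (d : forall n, X n -> X n -> R)
    (x : forall n, X n) (D : prod_topology X -> prod_topology X -> R) : Prop :=
  exists f : (R -> prod_topology X) -> (forall n, R -> X n),
    [/\ forall l, is_loop (x : prod_topology X) l -> forall n, is_loop (x n) (f l n),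
        forall l l', is_loop (x : prod_topology X) l -> is_loop (x : prod_topology X) l' ->
          (h_eq D x l l' <-> forall n, h_eq (d n) (x n) (f l n) (f l' n)),
        forall l l', is_loop (x : prod_topology X) l -> is_loop (x : prod_topology X) l' ->
          forall n, h_eq (d n) (x n) (f (concat l l') n) (concat (f l n) (f l' n)) &
        forall g : forall n, R -> X n, (forall n, is_loop (x n) (g n)) ->
          exists2 l, is_loop (x : prod_topology X) l &
            forall n, h_eq (d n) (x n) (f l n) (g n)].

(* Main.v *)
Set Warnings "-notation-overridden,-ambiguous-paths,-notation-incompatible-prefix,-deprecated".
Require Import Defs.
From mathcomp Require Import all_boot all_order all_algebra.
From mathcomp Require Import all_classical all_reals all_analysis.
From mathcomp Require Import Rstruct Rstruct_topology.
From mathcomp Require Import ring lra.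
Set Implicit Arguments. Unset Strict Implicit. Unset Printing Implicit Defensive.
Import Order.TTheory GRing.Theory Num.Theory.
Local Open Scope classical_set_scope.
Local Open Scope ring_scope.
Lemma prod_cvg (X : nat -> topologicalType) (T : Type) (F : set_system T)
  (FF : Filter F) (g : T -> prod_topology X) (p : prod_topology X) :
  (forall i, (fun t => g t i) @ F --> p i) -> g @ F --> p.
Proof.
move=> H.
have : (g @ F) --> (p : product_topology_def X).
  apply/cvg_sup => i A /=.
  rewrite (@nbhsE (initial_topology (fun f : prod_topology X => f i))).
  move=> [B [[C oC <-] Cp] BA].
  have := H i C; rewrite nbhs_simpl /=.
  move=> /(_ (open_nbhs_nbhs (conj oC Cp))).
  by apply: filterS => t /= Ct; apply: BA.
by [].
Qed.

Lemma wcontP (T Y : topologicalType) (A : set T) (f : T -> Y) :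
  {within A, continuous f} <-> (forall z, A z -> f @ within A (nbhs z) --> f z).
Proof. exact: subspace_continuousP. Qed.

Lemma wcomp (T Y Z : topologicalType) (A : set T) (f : T -> Y) (h : Y -> Z) :
  continuous h -> {within A, continuous f} -> {within A, continuous (h \o f)}.
Proof.
move=> ch /wcontP cf; apply/wcontP => z Az.
apply: cvg_comp (cf z Az) (ch (f z)).
Qed.

Lemma wcomp_path (T Y : topologicalType) (A : set T) (g : T -> R) (p : R -> Y) :
  continuous g -> (forall z, A z -> I01 (g z)) -> is_path p ->
  {within A, continuous (p \o g)}.
Proof.
move=> cg gA /wcontP cp; apply/wcontP => z Az.
apply: cvg_comp (cp _ (gA z Az)).
move=> U /= HU; rewrite /within /= in HU *.
rewrite nbhs_simpl /=.
have := cg z _ HU; rewrite nbhs_simpl /=.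
by apply: filterS => w Hw Aw; apply: Hw; apply: gA.
Qed.

Lemma wcont_prod (X : nat -> topologicalType) (T : topologicalType) (A : set T)
  (f : T -> prod_topology X) :
  (forall i, {within A, continuous (fun t => f t i)}) -> {within A, continuous f}.
Proof.
move=> H; apply/wcontP => z Az; apply: prod_cvg => i.
exact: (proj1 (wcontP _ _) (H i) z Az).
Qed.

Lemma wcont_proj (X : nat -> topologicalType) (T : topologicalType) (A : set T)
  (f : T -> prod_topology X) i :
  {within A, continuous f} -> {within A, continuous (fun t => f t i)}.
Proof.
move=> H; exact: (@wcomp T (prod_topology X) (X i) A f (@proj nat X i) (@proj_continuous nat X i) H).
Qed.
Section RC.
Variable T : topologicalType.
Implicit Types f g : T -> R.
Lemma contD f g x : {for x, continuous f} -> {for x, continuous g} ->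
  {for x, continuous (fun t => f t + g t)}.
Proof. by move=> hf hg; apply: (@cvgD _ R^o _ _ _ f g). Qed.
Lemma contM f g x : {for x, continuous f} -> {for x, continuous g} ->
  {for x, continuous (fun t => f t * g t)}.
Proof. by move=> hf hg; apply: (@cvgM R _ _ _ f g). Qed.
Lemma contmin f g x : {for x, continuous f} -> {for x, continuous g} ->
  {for x, continuous (fun t => Num.min (f t) (g t))}.
Proof. by move=> hf hg; apply: (@continuous_min R T f g). Qed.
Lemma contmax f g x : {for x, continuous f} -> {for x, continuous g} ->
  {for x, continuous (fun t => Num.max (f t) (g t))}.
Proof. by move=> hf hg; apply: (@continuous_max R T f g). Qed.
Lemma contC (c : R) x : {for x, continuous (fun _ : T => c)}.
Proof. exact: cvg_cst. Qed.
End RC.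
Lemma contfst (x : R * R) : {for x, continuous (fun p : R * R => p.1)}.
Proof. exact: cvg_fst. Qed.
Lemma contsnd (x : R * R) : {for x, continuous (fun p : R * R => p.2)}.
Proof. exact: cvg_snd. Qed.
Lemma contid (x : R) : {for x, continuous (fun p : R => p)}.
Proof. exact: cvg_id. Qed.
Lemma cont_affine (a b : R) : continuous (fun s : R => a * s + b).
Proof. by move=> s; apply: contD; [apply: contM; [apply: contC|apply: contid]|apply: contC]. Qed.
Lemma itvcc (a b s : R) : ([set` `[a, b]] : set R) s = (a <= s <= b).
Proof. by rewrite /= in_itv. Qed.
Lemma I01E s : I01 s = (0 <= s <= 1).
Proof. by rewrite /I01 itvcc. Qed.
Lemma I01_split : I01 = [set` `[0, 2^-1]] `|` [set` `[2^-1, 1]].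
Proof.
apply/seteqP; split => s /=; rewrite I01E /= ?in_itv /=.
  move=> /andP[h0 h1].
  have [hs|hs] : s <= 2^-1 \/ 2^-1 <= s by lra.
    by left; apply/andP; split; lra.
  by right; apply/andP; split; lra.
by case => /andP[a b]; apply/andP; split; lra.
Qed.



Lemma path_concat (Y : topologicalType) (p q : R -> Y) :
  is_path p -> is_path q -> p 1 = q 0 -> is_path (concat p q).
Proof.
move=> cp cq e.
suff: {within [set` `[0, 2^-1]] `|` [set` `[2^-1, 1]], continuous (concat p q)}.
  by rewrite /is_path I01_split.
apply: withinU_continuous; [exact: interval_closed | exact: interval_closed | |].
- apply: (@subspace_eq_continuous _ _ _ (p \o (fun s => 2 * s + 0))).
    move=> s; rewrite inE /= in_itv /= => /andP[_ hs].
    by rewrite /from_subspace /concat addr0; case: ifPn => // /negP[].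
  apply: wcomp_path => //; first exact: cont_affine.
  move=> z; rewrite /= I01E /= in_itv /= => /andP[a b]; apply/andP; split; lra.
- apply: (@subspace_eq_continuous _ _ _ (q \o (fun s => 2 * s + (-1)))).
    move=> s; rewrite inE /= in_itv /= => /andP[hs _].
    rewrite /from_subspace /concat /=; case: ifPn => hs2; last by [].
    have -> : s = 2^-1 by apply/eqP; rewrite eq_le hs2 hs.
    have -> : (2 : R) * 2^-1 = 1 by lra.
    by rewrite e; congr q; lra.
  apply: wcomp_path => //; first exact: cont_affine.
  move=> z; rewrite /= I01E /= in_itv /= => /andP[a b]; apply/andP; split; lra.
Qed.

Lemma path_reverse (Y : topologicalType) (p : R -> Y) :
  is_path p -> is_path (reverse p).
Proof.
move=> cp.
have -> : reverse p = p \o (fun s => (-1) * s + 1).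
  by apply: funext => s; rewrite /reverse /=; congr p; lra.
apply: wcomp_path => //; first exact: cont_affine.
move=> z; rewrite /= !I01E => /andP[a b]; apply/andP; split; lra.
Qed.

Lemma I01_compact : compact I01.
Proof. exact: segment_compact. Qed.

Lemma near_cov_I01 (I : Type) (F : set_system I) (P : I -> R -> Prop) :
  Filter F ->
  (forall s, I01 s -> exists2 U, nbhs s U &
     exists2 V, F V & forall s' i, U s' -> V i -> I01 s' -> P i s') ->
  F (fun i => forall s, I01 s -> P i s).
Proof.
move=> FF H.
have nc := (near_covering_withinP I01).2 ((compact_near_coveringP I01).1 I01_compact).
apply: (nc I F P FF) => s Is.
have [U nU [V FV HUV]] := H s Is.
exists (U, V) => //= -[s' i] /= [Us' Vi]; exact: HUV.
Qed.

Section Metric.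
Variables (Y : topologicalType) (d : Y -> Y -> R) (hd : metrizes d).

Lemma dge0 a b : 0 <= d a b.
Proof. by case: hd => -[]. Qed.
Lemma dsym a b : d a b = d b a.
Proof. by case: hd => -[]. Qed.
Lemma dtri a b c : d a c <= d a b + d b c.
Proof. by case: hd => -[]. Qed.
Lemma dxx a : d a a = 0.
Proof. by case: hd => -[_ h _ _] _; apply/h. Qed.

Lemma ball_nbhs y e : 0 < e -> nbhs y [set z | d y z < e].
Proof.
move=> e0; apply: open_nbhs_nbhs; split; last by rewrite /= dxx.
apply/(hd.2 _).2 => z /= hz; exists (e - d y z); first by rewrite subr_gt0.
move=> w /= hw; have := dtri y z w; lra.
Qed.

Lemma nbhs_ball y U : nbhs y U -> exists2 e, 0 < e & [set z | d y z < e] `<=` U.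
Proof.
rewrite nbhsE => -[B [oB By] BU]; have [e e0 He] := (hd.2 B).1 oB y By.
by exists e => // z /He; apply: BU.
Qed.

Lemma path_near (k : R -> Y) s e : is_path k -> I01 s -> 0 < e ->
  nbhs s (fun s' => I01 s' -> d (k s) (k s') < e).
Proof.
move=> hk Is e0.
exact: ((wcontP _ _).1 hk s Is _ (ball_nbhs (k s) e0)).
Qed.

Lemma path_bounded (f g : R -> Y) : is_path f -> is_path g ->
  exists M, forall s, I01 s -> d (f s) (g s) <= M.
Proof.
move=> hf hg.
have : (pinfty_nbhs R) (fun M => forall s, I01 s -> d (f s) (g s) < M).
  apply: near_cov_I01 => s Is.
  exists (fun s' => I01 s' -> d (f s) (f s') < 1 /\ d (g s) (g s') < 1).
    apply: filterS (filterI (path_near hf Is ltr01) (path_near hg Is ltr01)).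
    by move=> s' [h1 h2] Is'; split; [apply: h1|apply: h2].
  exists (fun M => d (f s) (g s) + 2 < M).
    exact: nbhs_pinfty_gt (num_real _).
  move=> s' M /(_ _) H hM Is'; have [h1 h2] := H Is'.
  have := dtri (f s') (f s) (g s'); have := dtri (f s) (g s) (g s').
  rewrite (dsym (f s') (f s)); lra.
move=> /filter_ex [M HM]; exists M => s Is; exact/ltW/HM.
Qed.
End Metric.

Lemma ld_le (Y : topologicalType) (d : Y -> Y -> R) (f g : R -> Y) c :
  (forall s, I01 s -> d (f s) (g s) <= c) -> loop_dist d f g <= c.
Proof.
move=> H; apply: ge_sup.
  by exists (d (f 0) (g 0)), 0 => //; rewrite I01E lexx ler01.
by move=> _ [s Is <-]; apply: H.
Qed.

Lemma ld_ge (Y : topologicalType) (d : Y -> Y -> R) (hd : metrizes d)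
  (f g : R -> Y) : is_path f -> is_path g ->
  forall s, I01 s -> d (f s) (g s) <= loop_dist d f g.
Proof.
move=> hf hg s Is; have [M HM] := path_bounded hd hf hg.
apply: sup_upper_bound; last by exists s.
split; first by exists (d (f s) (g s)), s.
by exists M => _ [t It <-]; apply: HM.
Qed.

Lemma unif (Y Z : topologicalType) (d : Y -> Y -> R) (hd : metrizes d)
  (dz : Z -> Z -> R) (hdz : metrizes dz) (h : Y -> Z) (ch : continuous h)
  (k : R -> Y) (hk : is_path k) e (e0 : 0 < e) :
  exists2 δ, 0 < δ & forall s, I01 s -> forall y, d (k s) y < δ -> dz (h (k s)) (h y) < e.
Proof.
have : (0:R)^'+ (fun δ => forall s, I01 s -> forall y, d (k s) y < δ ->
                             dz (h (k s)) (h y) < e).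
  apply: near_cov_I01 => s Is.
  have e20 : 0 < e / 2 by lra.
  have /(ch (k s)) := ball_nbhs hdz (h (k s)) e20.
  move=> /(nbhs_ball hd) [η η0 Hη].
  have η20 : 0 < η / 2 by lra.
  exists (fun s' => I01 s' -> d (k s) (k s') < η / 2); first exact: path_near.
  exists (fun δ => δ < η / 2); first exact: nbhs_right_lt.
  move=> s' δ H1 H2 Is' y hy; have a := H1 Is'.
  have b : dz (h (k s)) (h (k s')) < e / 2 by apply: (Hη (k s')) => /=; lra.
  have c : dz (h (k s)) (h y) < e / 2.
    apply: (Hη y) => /=; have := dtri hd (k s) (k s') y; lra.
  have := dtri hdz (h (k s')) (h (k s)) (h y); rewrite (dsym hdz (h (k s')) (h (k s))); lra.
move=> H; have [δ [Hδ δ0]] := filter_ex (filterI H (nbhs_right_gt 0)).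
by exists δ.
Qed.

Section Prod.
Variables (X : nat -> topologicalType) (x : prod_topology X).
Local Notation P := (prod_topology X).

Definition trunc (N : nat) (y : P) : P := fun i => if (i < N)%N then y i else x i.

Lemma trunc_cvg (p : P) :
  (fun yN : P * nat => trunc yN.2 yN.1) @ filter_prod (nbhs p) \oo --> p.
Proof.
apply: prod_cvg => i U /= nU.
have := @proj_continuous nat X i p U nU; rewrite nbhs_simpl /= => nU'.
exists (proj i @^-1` U, [set N | (i < N)%N]) => /=.
  by split => //; exists i.+1.
by move=> [y N] /= [Uy iN]; rewrite /trunc iN.
Qed.

Lemma path_trunc N (l : R -> P) : is_path l -> is_path (fun s => trunc N (l s)).
Proof.
move=> hl; apply: wcont_prod => i; rewrite /trunc /=.
case: (i < N)%N; first by apply: wcont_proj.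
by apply: continuous_subspaceT; exact: cst_continuous.
Qed.

Variables (D : P -> P -> R) (hD : metrizes D).

Lemma trunc_approx (l : R -> P) (hl : is_path l) e (e0 : 0 < e) :
  exists N, forall s, I01 s -> D (l s) (trunc N (l s)) < e.
Proof.
have : \oo (fun N => forall s, I01 s -> D (l s) (trunc N (l s)) < e).
  apply: near_cov_I01 => s Is.
  have e20 : 0 < e / 2 by lra.
  have := trunc_cvg (ball_nbhs hD (l s) e20).
  move=> [[A B] /= [nA nB] AB].
  exists (fun s' => I01 s' -> A (l s') /\ D (l s) (l s') < e / 2).
    have := (wcontP _ _).1 hl s Is _ (filterI nA (ball_nbhs hD (l s) e20)).
    by apply.
  exists B => // s' N H1 BN Is'; have [As' ds'] := H1 Is'.
  have := AB (l s', N) (conj As' BN) => /= h.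
  have := dtri hD (l s') (l s) (trunc N (l s')).
  rewrite (dsym hD (l s') (l s)); lra.
by move=> /filter_ex [N HN]; exists N.
Qed.
End Prod.

Section Loops.
Variables (Y : topologicalType) (y : Y).

Lemma path_cst : is_path (@cst R Y y).
Proof. by apply: continuous_subspaceT; exact: cst_continuous. Qed.

Lemma loop_cst : is_loop y (cst y).
Proof. by split => //; exact: path_cst. Qed.

Lemma loop_concat p q : is_loop y p -> is_loop y q -> is_loop y (concat p q).
Proof.
move=> [hp p0 p1] [hq q0 q1]; split.
- by apply: path_concat => //; rewrite p1 q0.
- by rewrite /concat ifT ?mulr0 //; lra.
- rewrite /concat ifF; last by apply/negbTE; rewrite -ltNge; lra.
  by have -> : (2 : R) * 1 - 1 = 1 by lra.
Qed.

Lemma loop_reverse p : is_loop y p -> is_loop y (reverse p).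
Proof.
move=> [hp p0 p1]; split; first exact: path_reverse.
- by rewrite /reverse subr0.
- by rewrite /reverse subrr.
Qed.

Lemma loop_comm a b : is_loop y a -> is_loop y b -> is_loop y (commutator a b).
Proof.
move=> ha hb; rewrite /commutator.
by apply: loop_concat; [apply: loop_concat; [apply: loop_concat|apply: loop_reverse]|apply: loop_reverse].
Qed.

Definition rho (p : R * R) : R := p.2 * Num.min (2 * p.1 + 0) ((-2) * p.1 + 2).

Lemma rho_cont : continuous rho.
Proof.
move=> p; apply: contM; first exact: contsnd.
apply: contmin; (apply: contD; [apply: contM; [apply: contC|apply: contfst]|apply: contC]).
Qed.

Lemma homotopic_refl (k : R -> Y) : is_loop y k ->
  path_homotopic (cst y) (concat k (reverse k)).
Proof.
move=> [hk k0 k1]; exists (k \o rho); split.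
- apply: wcomp_path => //; first exact: rho_cont.
  move=> [s t] [/= Is It]; rewrite I01E in Is; rewrite I01E in It.
  rewrite /rho /= I01E; move: Is It => /andP[s0 s1] /andP[t0 t1].
  have hm0 : 0 <= Num.min (2 * s + 0) (-2 * s + 2) by rewrite le_min; apply/andP; split; lra.
  have hm1 : Num.min (2 * s + 0) (-2 * s + 2) <= 1.
    by rewrite ge_min; case: (lerP s 2^-1) => h; [apply/orP; left|apply/orP; right]; lra.
  apply/andP; split; nra.
- move=> s Is; rewrite /rho /= mul0r k0; split => //.
  rewrite mul1r /concat /reverse; case: ifPn => hs.
    by rewrite (min_idPl _) ?addr0 //; lra.
  rewrite -ltNge in hs; rewrite (min_idPr _); last by lra.
  by congr k; lra.
- move=> t It; rewrite /cst /=; split.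
  + have -> : rho (0, t) = 0 by rewrite /rho /= min_l; lra.
    by rewrite k0.
  + have -> : rho (1, t) = 0 by rewrite /rho /= min_r; lra.
    by rewrite k0.
Qed.

Lemma ccl_refl (d : Y -> Y -> R) (k : R -> Y) : is_loop y k ->
  closed_commutator_loops d y (concat k (reverse k)).
Proof.
move=> hk S [sub hom hc _ _] _ _.
apply: (hom (cst y)) => //; first by apply: loop_concat => //; exact: loop_reverse.
exact: homotopic_refl.
Qed.

Lemma comm_in (a b : R -> Y) : is_loop y a -> is_loop y b ->
  commutator_loops y (commutator a b).
Proof. by move=> ha hb S _; apply. Qed.

End Loops.

Section ProdGroups.
Variables (X : nat -> topologicalType) (x : prod_topology X).
Local Notation P := (prod_topology X).

Definition pr n (l : R -> P) : R -> X n := fun s => l s n.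

Lemma pr_concat n l l' : pr n (concat l l') = concat (pr n l) (pr n l').
Proof. by apply: funext => s; rewrite /pr /concat; case: ifP. Qed.

Lemma pr_reverse n l : pr n (reverse l) = reverse (pr n l).
Proof. by []. Qed.

Lemma pr_comm n a b : pr n (commutator a b) = commutator (pr n a) (pr n b).
Proof. by rewrite /commutator !pr_concat. Qed.

Lemma pr_cst n : pr n (cst x) = cst (x n).
Proof. by []. Qed.

Lemma loop_pr n l : is_loop x l -> is_loop (x n) (pr n l).
Proof.
move=> [hl l0 l1]; split; first exact: wcont_proj.
- by rewrite /pr l0.
- by rewrite /pr l1.
Qed.

Lemma homotopic_pr n l l' : path_homotopic l l' -> path_homotopic (pr n l) (pr n l').
Proof.
move=> [H [cH H1 H2]]; exists (fun p => H p n); split.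
- exact: wcont_proj.
- by move=> s Is; have [-> ->] := H1 s Is.
- by move=> t It; have [-> ->] := H2 t It.
Qed.

Definition dfx (N : nat) : X N -> P := @dfwith nat X x N.
Arguments dfx : clear implicits.

Lemma dfx_cont N : continuous (dfx N).
Proof. exact: (@dfwith_continuous nat X x N). Qed.

Lemma dfx_x N : dfx N (x N) = x.
Proof.
by apply: functional_extensionality_dep => i; rewrite /dfx; case: dfwithP.
Qed.

Definition J N (k : R -> X N) : R -> P := fun s => dfx N (k s).
Arguments J : clear implicits.

Lemma J_concat N k k' : J N (concat k k') = concat (J N k) (J N k').
Proof. by apply: funext => s; rewrite /J /concat; case: ifP. Qed.

Lemma J_reverse N k : J N (reverse k) = reverse (J N k).
Proof. by []. Qed.

Lemma J_comm N a b : J N (commutator a b) = commutator (J N a) (J N b).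
Proof. by rewrite /commutator !J_concat. Qed.

Lemma J_cst N : J N (cst (x N)) = cst x.
Proof. by apply: funext => s; rewrite /J /= dfx_x. Qed.

Lemma loop_J N k : is_loop (x N) k -> is_loop x (J N k).
Proof.
move=> [hk k0 k1]; split.
- exact: (wcomp (@dfx_cont N) hk).
- by rewrite /J k0 dfx_x.
- by rewrite /J k1 dfx_x.
Qed.

Lemma homotopic_J N k k' : path_homotopic k k' -> path_homotopic (J N k) (J N k').
Proof.
move=> [H [cH H1 H2]]; exists (fun p => dfx N (H p)); split.
- exact: (wcomp (@dfx_cont N) cH).
- by move=> s Is; have [-> ->] := H1 s Is.
- by move=> t It; have [-> ->] := H2 t It.
Qed.

Local Unset Implicit Arguments.
Variables (d : forall n, X n -> X n -> R) (hd : forall n, metrizes (d n)).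
Variables (D : P -> P -> R) (hD : metrizes D).

Lemma proj_ccl n m : closed_commutator_loops D x m ->
  closed_commutator_loops (d n) (x n) (pr n m).
Proof.
move=> hm S [sub hom hc hcat hrev] cS comS.
pose S' := fun l => is_loop x l /\ S (pr n l).
suff : S' m by case.
have sS' : loop_subgroup x S'.
  split.
  + by move=> l [].
  + move=> l l' [hl Sl] hl' hh; split => //.
    apply: (hom (pr n l)) => //; [exact: loop_pr | exact: homotopic_pr].
  + by split; [exact: loop_cst | rewrite pr_cst].
  + move=> l l' [hl Sl] [hl' Sl']; split; first exact: loop_concat.
    by rewrite pr_concat; apply: hcat.
  + move=> l [hl Sl]; split; first exact: loop_reverse.
    by rewrite pr_reverse; apply: hrev.
have comS' : forall a b, is_loop x a -> is_loop x b -> S' (commutator a b).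
  move=> a b ha hb; split; first exact: loop_comm.
  by rewrite pr_comm; apply: comS; apply: comm_in; exact: loop_pr.
apply: hm => //.
- move=> l hl nS'l.
  have nSl : ~ S (pr n l) by move=> h; apply: nS'l.
  have [e e0 He] := cS _ (loop_pr n hl) nSl.
  have e20 : 0 < e / 2 by lra.
  have [δ δ0 Hδ] := unif hD (hd n) (@proj_continuous nat X n) (let: And3 h _ _ := hl in h) e20.
  exists δ => // l' hl' hdl [_ Sl']; apply: (He (pr n l')) => //; first exact: loop_pr.
  have : loop_dist (d n) (pr n l) (pr n l') <= e / 2.
    apply: ld_le => s Is; apply/ltW; apply: Hδ => //.
    have := ld_ge hD (let: And3 h _ _ := hl in h) (let: And3 h _ _ := hl' in h) Is.
    lra.
  lra.
- by move=> l hl; apply: hl.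
Qed.

Lemma J_ccl (S : set (R -> P)) N k : loop_subgroup x S -> loop_closed D x S ->
  commutator_loops x `<=` S ->
  closed_commutator_loops (d N) (x N) k -> S (J N k).
Proof.
move=> [sub hom hc hcat hrev] cS comS hk.
pose SN := fun k => is_loop (x N) k /\ S (J N k).
suff : SN k by case.
have sSN : loop_subgroup (x N) SN.
  split.
  + by move=> l [].
  + move=> l l' [hl Sl] hl' hh; split => //.
    apply: (hom (J N l)) => //; [exact: loop_J | exact: homotopic_J].
  + by split; [exact: loop_cst | rewrite J_cst].
  + move=> l l' [hl Sl] [hl' Sl']; split; first exact: loop_concat.
    by rewrite J_concat; apply: hcat.
  + move=> l [hl Sl]; split; first exact: loop_reverse.
    by rewrite J_reverse; apply: hrev.
have comSN : forall a b, is_loop (x N) a -> is_loop (x N) b -> SN (commutator a b).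
  move=> a b ha hb; split; first exact: loop_comm.
  by rewrite J_comm; apply: comS; apply: comm_in; exact: loop_J.
apply: hk => //.
- move=> l hl nSNl.
  have nSl : ~ S (J N l) by move=> h; apply: nSNl.
  have [e e0 He] := cS _ (loop_J hl) nSl.
  have e20 : 0 < e / 2 by lra.
  have [δ δ0 Hδ] := unif (hd N) hD (@dfx_cont N) (let: And3 h _ _ := hl in h) e20.
  exists δ => // l' hl' hdl [_ Sl']; apply: (He (J N l')) => //; first exact: loop_J.
  have : loop_dist D (J N l) (J N l') <= e / 2.
    apply: ld_le => s Is; apply/ltW; apply: Hδ => //.
    have := ld_ge (hd N) (let: And3 h _ _ := hl in h) (let: And3 h _ _ := hl' in h) Is.
    lra.
  lra.
- by move=> l hl; apply: hl.
Qed.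

Definition phi (p : R * R) : R :=
  ((-1) * p.2 + 1) * Num.min (2 * p.1 + 0) 1 + p.2 * p.1.
Definition psi (p : R * R) : R :=
  ((-1) * p.2 + 1) * Num.max (2 * p.1 + (-1)) 0 + p.2 * p.1.

Lemma affc (a b : R) (f : R * R -> R) p : {for p, continuous f} ->
  {for p, continuous (fun q => a * f q + b)}.
Proof. by move=> h; apply: contD; [apply: contM; [apply: contC|]|apply: contC]. Qed.

Lemma phi_cont : continuous phi.
Proof.
move=> p; rewrite /phi; apply: (contD (T:=(R*R)%type)); apply: (contM (T:=(R*R)%type)).
- apply: (contD (T:=(R*R)%type)); [apply: (contM (T:=(R*R)%type)); [exact: contC|exact: contsnd]|exact: contC].
- by apply: (contmin (T:=(R*R)%type)); [apply: (contD (T:=(R*R)%type)); [apply: (contM (T:=(R*R)%type)); [exact: contC|exact: contfst]|exact: contC]|exact: contC].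
- exact: contsnd.
- exact: contfst.
Qed.

Lemma psi_cont : continuous psi.
Proof.
move=> p; rewrite /psi; apply: (contD (T:=(R*R)%type)); apply: (contM (T:=(R*R)%type)).
- apply: (contD (T:=(R*R)%type)); [apply: (contM (T:=(R*R)%type)); [exact: contC|exact: contsnd]|exact: contC].
- by apply: (contmax (T:=(R*R)%type)); [apply: (contD (T:=(R*R)%type)); [apply: (contM (T:=(R*R)%type)); [exact: contC|exact: contfst]|exact: contC]|exact: contC].
- exact: contsnd.
- exact: contfst.
Qed.

Lemma phi_in p : (I01 `*` I01) p -> I01 (phi p).
Proof.
case: p => s t [/= Is It]; rewrite !I01E in Is It *; rewrite /phi /=.
move: Is It => /andP[s0 s1] /andP[t0 t1].
have [h|h] : s <= 2^-1 \/ 2^-1 <= s by lra.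
  by rewrite min_l; [apply/andP; split; nra | lra].
by rewrite min_r; [apply/andP; split; nra | lra].
Qed.

Lemma psi_in p : (I01 `*` I01) p -> I01 (psi p).
Proof.
case: p => s t [/= Is It]; rewrite !I01E in Is It *; rewrite /psi /=.
move: Is It => /andP[s0 s1] /andP[t0 t1].
have [h|h] : s <= 2^-1 \/ 2^-1 <= s by lra.
  by rewrite max_r; [apply/andP; split; nra | lra].
by rewrite max_l; [apply/andP; split; nra | lra].
Qed.

Definition gN N i (p : R * R) : R :=
  if (i < N)%N then phi p else if i == N then psi p else 0.

Lemma gN_cont N i : continuous (gN N i).
Proof.
rewrite /gN; case: (i < N)%N; first exact: phi_cont.
case: (i == N); first exact: psi_cont.
by move=> p; exact: contC.
Qed.

Lemma gN_in N i p : (I01 `*` I01) p -> I01 (gN N i p).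
Proof.
move=> hp; rewrite /gN; case: (i < N)%N; first exact: phi_in.
case: (i == N); first exact: psi_in.
by rewrite I01E lexx ler01.
Qed.

Definition tm N (m : R -> P) : R -> P := fun s => trunc x N (m s).

Lemma loop_tm N m : is_loop x m -> is_loop x (tm N m).
Proof.
move=> [hm m0 m1]; split; first exact: path_trunc.
- apply: functional_extensionality_dep => i; rewrite /tm /trunc m0.
  by case: ifP.
- apply: functional_extensionality_dep => i; rewrite /tm /trunc m1.
  by case: ifP.
Qed.

Lemma homotopic_step N m : is_loop x m ->
  path_homotopic (concat (tm N m) (J N (pr N m))) (tm N.+1 m).
Proof.
move=> [hm m0 m1].
have mi0 i : m 0 i = x i by rewrite m0.
have mi1 i : m 1 i = x i by rewrite m1.
exists (fun p => fun i => m (gN N i p) i); split.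
- apply: wcont_prod => i.
  exact: (wcomp_path (gN_cont N i) (@gN_in N i) (wcont_proj (i:=i) hm)).
- move=> s Is; rewrite I01E in Is; move: Is => /andP[s0 s1].
  split; apply: functional_extensionality_dep => i.
  + rewrite /concat /gN /tm /trunc /J /dfx /pr.
    case: (boolP (s <= 2^-1)) => hs /=.
    * case: (ltnP i N) => iN.
        by congr (m _ i); rewrite /phi /= min_l; lra.
      case: (eqVneq i N) => iN'.
        have -> : psi (s, 0) = 0 by rewrite /psi /= max_r; lra.
        by rewrite mi0.
      by rewrite mi0.
    * rewrite -ltNge in hs.
      case: (ltnP i N) => iN.
        rewrite dfwithout; last by rewrite neq_ltn iN orbT.
        have -> : phi (s, 0) = 1 by rewrite /phi /= min_r; lra.
        by rewrite mi1.
      case: (eqVneq i N) => iN'.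
        subst i; rewrite dfwithin; congr (m _ N).
        by rewrite /psi /= max_l; lra.
      rewrite dfwithout; last by rewrite eq_sym.
      by rewrite mi0.
  + rewrite /gN /tm /trunc.
    case: (ltnP i N) => iN.
      rewrite ifT; last by rewrite ltnS ltnW.
      by congr (m _ i); rewrite /phi /=; lra.
    case: (eqVneq i N) => iN' /=.
      subst i; rewrite ltnSn.
      by congr (m _ N); rewrite /psi /=; lra.
    rewrite ifF ?mi0 //; apply/negbTE; rewrite -leqNgt.
    by rewrite ltn_neqAle eq_sym iN' iN.
- move=> t It; rewrite I01E in It; move: It => /andP[t0 t1].
  split; apply: functional_extensionality_dep => i.
  + rewrite /concat ifT; last by lra.
    rewrite /gN /tm /trunc mulr0 mi0.
    case: (ltnP i N) => iN.
      have -> : phi (0, t) = 0 by rewrite /phi /= min_l; lra.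
      by rewrite mi0.
    case: (eqVneq i N) => iN'.
      have -> : psi (0, t) = 0 by rewrite /psi /= max_r; lra.
      by rewrite mi0.
    by rewrite mi0.
  + rewrite /concat ifF; last by apply/negbTE; rewrite -ltNge; lra.
    have -> : (2 : R) * 1 - 1 = 1 by lra.
    rewrite /J /pr mi1 -/(dfx N (x N)) dfx_x /gN.
    case: (ltnP i N) => iN.
      have -> : phi (1, t) = 1 by rewrite /phi /= min_r; lra.
      by rewrite mi1.
    case: (eqVneq i N) => iN'.
      have -> : psi (1, t) = 1 by rewrite /psi /= max_l; lra.
      by rewrite mi1.
    by rewrite mi0.
Qed.

Lemma ccl_all m : is_loop x m ->
  (forall n, closed_commutator_loops (d n) (x n) (pr n m)) ->
  closed_commutator_loops D x m.
Proof.
move=> hm hn S sS cS comS.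
have step : forall N, S (tm N m).
  elim=> [|N IH].
    have -> : tm 0 m = cst x.
      apply: funext => s; apply: functional_extensionality_dep => i.
      by rewrite /tm /trunc.
    by case: sS.
  case: (sS) => _ hom _ hcat _.
  apply: (hom (concat (tm N m) (J N (pr N m)))).
  - by apply: hcat => //; apply: J_ccl.
  - exact: loop_tm.
  - exact: homotopic_step.
have [//|nSm] := pselect (S m).
have [e e0 He] := cS m hm nSm.
have e20 : 0 < e / 2 by lra.
have [N HN] := trunc_approx x hD (let: And3 h _ _ := hm in h) e20.
exfalso; apply: (He (tm N m)); [exact: loop_tm | | exact: step].
have : loop_dist D m (tm N m) <= e / 2.
  by apply: ld_le => s Is; apply/ltW; apply: HN.
lra.
Qed.
End ProdGroups.

Theorem theorem4p2 (X : nat -> topologicalType)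
    (d : forall n, X n -> X n -> R)
    (hpc : forall n, path_connected (X n))
    (hd : forall n, metrizes (d n))
    (D : prod_topology X -> prod_topology X -> R)
    (hD : metrizes D)
    (x : forall n, X n) :
  h_prod_iso d x D.
Proof.
exists (fun l n => pr n l); split.
- by move=> l hl n; exact: loop_pr.
- move=> l l' hl hl'; rewrite /h_eq; split.
  + move=> h n; rewrite -pr_reverse -pr_concat.
    exact: (@proj_ccl X x d hd D hD n _ h).
  + move=> h; apply: (@ccl_all X x d hd D hD).
      by apply: loop_concat => //; exact: loop_reverse.
    by move=> n; rewrite pr_concat pr_reverse; exact: h.
- move=> l l' hl hl' n; rewrite pr_concat /h_eq; apply: ccl_refl.
  by apply: loop_concat; exact: loop_pr.
- move=> g hg; exists (fun s n => g n s).
    split.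
    + apply: wcont_prod => i; by case: (hg i).
    + by apply: functional_extensionality_dep => i; case: (hg i).
    + by apply: functional_extensionality_dep => i; case: (hg i).
  by move=> n; rewrite /h_eq /pr; apply: ccl_refl; exact: (hg n).
Qed.
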